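(* Let $(\mathcal{U},\mathcal{S},k)$ be a Set Cover instance with $\mathcal{U}=\bigcup_{A\in\mathcal{S}}A$, let $x\ge1$, $0<y\le1$, and let $\mathcal{G}$ be the fitness graph constructed below, with $n=|V|$. Let $X\subseteq V$ be a configuration such that the sets in $X\cap V_1$ cover $V_2$. Then, starting from $X$, the Heterogeneous Moran process reaches a configuration $X^*$ with $V_2\cup(X\cap V_1)\subseteq X^*$ with probability at least $\left(\frac{x/n}{x/n+n}\right)^{|V_2|}$.
   Context: Construction: $V=V_1\cup V_2$ with $V_1=\mathcal{S}$ and $V_2=\mathcal{U}$; $E=\{(A,v)\in V_1\times V_2: v\in A\}\cup(V_2\times V_1)$; $w(u,v)=1/d(u)$ for $(u,v)\in E$, $d(u)$ the out-degree of $u$. Resident fitness $r\equiv1$; mutant fitness $m(u)=x$ on $V_1$ and $m(u)=y$ on $V_2$. For a configuration (set of mutants) $X$, $f_X(u)=m(u)$ if $u\in X$, else $r(u)$. The Heterogeneous Moran process: from configuration $X$, pick $u$ with probability $f_X(u)/\sum_v f_X(v)$, then $v$ with probability $w(u,v)$, and $v$ takes the type of $u$. *)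

(* Defs.v *)
From HB Require Import structures.
From mathcomp Require Import all_boot all_order all_algebra.
From mathcomp Require Import classical_sets reals.
Set Implicit Arguments. Unset Strict Implicit. Unset Printing Implicit Defensive.
Import Order.TTheory GRing.Theory Num.Theory.
Local Open Scope ring_scope.

(* Vertices V, weights w u v (w u v = 1/d(u) on edges, 0 otherwise), fitness
   f X u of vertex u in configuration X (set of mutants).  One step from X:
   pick u with probability f X u / sum_z f X z, then v with probability w u v,
   and v takes the type of u (if u has no out-edge, i.e. sum_v w u v = 0,
   nothing happens).  [moran_reach Tgt t X] is the probability that the
   process started at X is in a configuration satisfying Tgt at some time <= t. *)
Fixpoint moran_reach (R : realType) (V : finType) (w : V -> V -> R)
    (f : {set V} -> V -> R) (Tgt : pred {set V}) (t : nat) (X : {set V}) : R :=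
  match t with
  | 0 => (Tgt X)%:R
  | t'.+1 =>
      if Tgt X then 1 else
      \sum_(u : V) (f X u / \sum_(z : V) f X z) *
        (\sum_(v : V) w u v *
             moran_reach w f Tgt t' (if u \in X then v |: X else X :\ v)
         + (1 - \sum_(v : V) w u v) * moran_reach w f Tgt t' X)
  end.

Definition moran_hit (R : realType) (V : finType) (w : V -> V -> R)
    (f : {set V} -> V -> R) (Tgt : pred {set V}) (X : {set V}) : R :=
  sup [set moran_reach w f Tgt t X | t in [set: nat]]%classic.

(* Universe U (a finType; the hypothesis U = union of S is stated in the theorem),
   family S of subsets.  V1 = S, V2 = U, V = V1 + V2. *)
Definition V1 (U : finType) (S : {set {set U}}) := {A : {set U} | A \in S}.
Definition vert (U : finType) (S : {set {set U}}) := (V1 S + U)%type.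

Definition sc_edge (U : finType) (S : {set {set U}}) (u v : vert S) : bool :=
  match u, v with
  | inl A, inr e => e \in val A
  | inr _, inl _ => true
  | _, _ => false
  end.

Definition sc_outdeg (U : finType) (S : {set {set U}}) (u : vert S) : nat :=
  #|[pred v | sc_edge u v]|.

Definition sc_w (R : realType) (U : finType) (S : {set {set U}}) (u v : vert S) : R :=
  if sc_edge u v then (sc_outdeg u)%:R^-1 else 0.

Definition sc_fit (R : realType) (U : finType) (S : {set {set U}}) (x y : R)
    (X : {set vert S}) (u : vert S) : R :=
  if u \in X then (match u with inl _ => x | inr _ => y end) else 1.

Definition sc_target (U : finType) (S : {set {set U}}) (X : {set vert S}) :
    pred {set vert S} :=
  fun Xs => [forall e : U, inr e \in Xs] &&
            [forall A : V1 S, (inl A \in X) ==> (inl A \in Xs)].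

(* Main.v *)
Require Import Defs.
From HB Require Import structures.
From mathcomp Require Import all_boot all_order all_algebra.
From mathcomp Require Import classical_sets reals.
From mathcomp Require Import lra ring.
Import Order.TTheory GRing.Theory Num.Theory.
Local Open Scope ring_scope.
Set Implicit Arguments. Unset Strict Implicit. Unset Printing Implicit Defensive.

Lemma reach_bounds (R : realType) (V : finType) (w : V -> V -> R)
    (f : {set V} -> V -> R) (Tgt : pred {set V})
    (hw : forall u v, 0 <= w u v) (hw1 : forall u, \sum_v w u v <= 1)
    (hf : forall X u, 0 <= f X u) :
  forall t X, 0 <= moran_reach w f Tgt t X <= 1.
Proof.
elim=> [|t IH] X /=.
  by case: (Tgt X); rewrite ?ler01 ?lexx.
case: (Tgt X); first by rewrite ler01 lexx.
set F := \sum_z f X z.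
have F0 : 0 <= F by apply: sumr_ge0 => z _.
have step : forall u, 0 <= \sum_v w u v * moran_reach w f Tgt t
      (if u \in X then v |: X else X :\ v) +
    (1 - \sum_v w u v) * moran_reach w f Tgt t X <= 1.
  move=> u; set s := \sum_v w u v.
  have [r0 r1] := andP (IH X).
  have hs1 := hw1 u.
  have A : 0 <= \sum_v w u v * moran_reach w f Tgt t
      (if u \in X then v |: X else X :\ v) <= s.
    rewrite /s; apply/andP; split.
      apply: sumr_ge0 => v _; apply: mulr_ge0 => //; by have /andP[] := IH (if u \in X then v |: X else X :\ v).
    apply: ler_sum => v _; rewrite -[X in _ <= X]mulr1; apply: ler_wpM2l => //.
    by have /andP[] := IH (if u \in X then v |: X else X :\ v).
  move: A => /andP[a0 a1].
  have B0 : 0 <= (1 - s) * moran_reach w f Tgt t X.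
    by apply: mulr_ge0 => //; rewrite subr_ge0.
  have B1 : (1 - s) * moran_reach w f Tgt t X <= 1 - s.
    by rewrite -[X in _ <= X]mulr1; apply: ler_wpM2l => //; rewrite subr_ge0.
  apply/andP; split; first by rewrite addr_ge0.
  by apply: (le_trans (lerD a1 B1)); rewrite addrC subrK.
apply/andP; split.
  apply: sumr_ge0 => u _; apply: mulr_ge0; first by apply: divr_ge0.
  by have /andP[] := step u.
apply: (@le_trans _ _ (\sum_u f X u / F)).
  apply: ler_sum => u _; rewrite -[X in _ <= X]mulr1; apply: ler_wpM2l.
    by apply: divr_ge0.
  by have /andP[] := step u.
rewrite -mulr_suml -/F.
have [->|Fn0] := eqVneq F 0; first by rewrite mul0r ler01.
by rewrite divff.
Qed.
Lemma key (R : realType) (p g b G P P1 nu : R) : 0 < p -> p <= 1 -> 0 < g -> g <= 1 ->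
  p * g <= G -> 0 <= b -> b <= 1 -> p * b <= (1 - p) * G -> P = p * P1 -> 0 <= P1 -> 0 <= nu ->
  Num.max (P - (1 - (1 - p) * g) * nu) 0 <=
  (1 - b) * Num.max (P - nu) 0 + G * (Num.max (P1 - nu) 0 - Num.max (P - nu) 0).
Proof.
move=> p0 p1 g0 g1 hG b0 b1 hb hP P10 nu0.
have G0 : 0 <= G by nra.
have PP1 : P <= P1 by nra.
have F1 : 0 <= (1 - p) * (1 - g) * nu.
  by apply: mulr_ge0 => //; apply: mulr_ge0; rewrite subr_ge0.
have [h1|h1] := leP (P - nu) 0; have [h2|h2] := leP (P1 - nu) 0;
  have [h3|h3] := leP (P - (1 - (1 - p) * g) * nu) 0.
- lra.
- have : 0 <= p * (nu - P1) by apply: mulr_ge0; lra.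
  nra.
- have : 0 <= G * (P1 - nu) by apply: mulr_ge0; lra.
  lra.
- have H1 : 0 <= (nu - P) * (1 - g) by apply: mulr_ge0; lra.
  have H2 : 0 <= (G - p * g) * (P1 - nu) by apply: mulr_ge0; lra.
  nra.
- lra.
- lra.
- have : 0 <= (1 - b) * (P - nu) by apply: mulr_ge0; lra.
  have : 0 <= G * (P1 - nu - (P - nu)) by apply: mulr_ge0; lra.
  lra.
- have H1 : p * b * (P - nu) <= (1 - p) * G * (P - nu) by apply: ler_wpM2r; lra.
  have H2 : (1 - p) * (p * g) * nu <= (1 - p) * G * nu.
    by apply: ler_wpM2r => //; apply: ler_wpM2l; lra.
  suff : p * (P - (1 - (1 - p) * g) * nu) <=
     p * ((1 - b) * (P - nu) + G * (P1 - nu - (P - nu))).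
    by rewrite ler_pM2l.
  nra.
Qed.
Section Gr.
Variables (R : realType) (U : finType) (S : {set {set U}}).

Lemma sum_w (u : vert S) :
  \sum_v (@sc_w R U S u v) = if sc_outdeg u == 0%N then 0 else 1.
Proof.
rewrite /sc_w -big_mkcond /= sumr_const.
rewrite -/(sc_outdeg u).
case: eqP => [->|/eqP d0]; first by rewrite mulr0n.
by rewrite -(mulr_natr (_^-1)) mulVf // pnatr_eq0.
Qed.

Lemma w_ge0 (u v : vert S) : 0 <= @sc_w R U S u v.
Proof. by rewrite /sc_w; case: sc_edge => //; rewrite invr_ge0 ler0n. Qed.

Lemma sum_w_le1 (u : vert S) : \sum_v (@sc_w R U S u v) <= 1.
Proof. by rewrite sum_w; case: eqP; rewrite ?ler01 ?lexx. Qed.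

Lemma w_edge (A : V1 S) (e : U) : e \in val A ->
  (#|[set: vert S]|%:R : R)^-1 <= @sc_w R U S (inl A) (inr e).
Proof.
move=> eA; rewrite /sc_w /= eA.
have d0 : (0 < sc_outdeg (inl A : vert S))%N.
  by apply/card_gt0P; exists (inr e); rewrite inE /= eA.
have dn : (sc_outdeg (inl A : vert S) <= #|[set: vert S]|)%N.
  by rewrite cardsT; apply: max_card.
rewrite lef_pV2 ?posrE ?ltr0n //; first by rewrite ler_nat.
by apply: (leq_trans d0).
Qed.

End Gr.
Lemma bern (R : realType) (d : R) t : 0 <= d -> 1 + t%:R * d <= (1 + d) ^+ t.
Proof.
move=> d0; elim: t => [|t IH]; first by rewrite mul0r addr0 expr0.
rewrite exprS -natr1.
have h : 0 <= t%:R * d * d by rewrite mulr_ge0 // mulr_ge0.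
have : (1 + d) * (1 + t%:R * d) <= (1 + d) * (1 + d) ^+ t.
  by apply: ler_wpM2l => //; lra.
nra.
Qed.

Lemma geom (R : realType) (m e : R) : 0 <= m -> m < 1 -> 0 < e -> exists t, m ^+ t < e.
Proof.
move=> m0 m1 e0.
have [->|mn0] := eqVneq m 0; first by exists 1%N; rewrite expr1.
have mp : 0 < m by rewrite lt_neqAle eq_sym mn0.
set d := m^-1 - 1.
have d0 : 0 < d by rewrite /d subr_gt0 invf_gt1.
have ed : 0 <= (e * d)^-1 by rewrite invr_ge0 mulr_ge0 // ltW.
have hb := archi_boundP ed.
exists (Num.bound ((e * d)^-1)).
set t := Num.bound _ in hb *.
have h1 := @bern _ d t (ltW d0).
have h2 : e^-1 < t%:R * d.
  by rewrite -ltr_pdivrMr // -invfM.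
have h3 : e^-1 < (1 + d) ^+ t by lra.
have -> : m = (1 + d)^-1 by rewrite /d addrC subrK invrK.
rewrite exprVn -[e]invrK ltf_pV2 //.
  by rewrite posrE exprn_gt0 // ltr_wpDr // ltW.
by rewrite posrE invr_gt0.
Qed.
Section M.
Variables (R : realType) (U : finType) (S : {set {set U}}) (x y : R) (X : {set vert S}).

Definition valid (Y : {set vert S}) := [forall A : V1 S, (inl A \in X) ==> (inl A \in Y)].
Definition kk (Y : {set vert S}) := #|[set e : U | inr e \notin Y]|.

Lemma valid_add (v : vert S) (Y : {set vert S}) : valid Y -> valid (v |: Y).
Proof.
move=> /forallP h; apply/forallP => A; apply/implyP => /(implyP (h A)) hA.
by rewrite in_setU1 hA orbT.
Qed.

Lemma kk_add (v : vert S) (Y : {set vert S}) : (kk (v |: Y) <= kk Y)%N.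
Proof.
apply: subset_leq_card; apply/fintype.subsetP => e; rewrite !inE negb_or.
by case/andP.
Qed.

Lemma kk_add_e (e0 : U) (Y : {set vert S}) : inr e0 \notin Y -> (kk (inr e0 |: Y) < kk Y)%N.
Proof.
move=> he; apply: proper_card; apply/properP; split.
  by apply/fintype.subsetP => e; rewrite !inE negb_or; case/andP.
by exists e0; rewrite !inE ?eqxx.
Qed.

Lemma tgt_iff (Y : {set vert S}) : sc_target X Y = valid Y && (kk Y == 0%N).
Proof.
rewrite /sc_target andbC; congr (_ && _).
apply/forallP/idP => [h|].
  by rewrite cards_eq0; apply/eqP/setP => e; rewrite !inE h.
rewrite cards_eq0 => /eqP h e.
have : e \notin [set e | inr e \notin Y] by rewrite h inE.
by rewrite inE negbK.
Qed.

Lemma f_ge0 (hx : 1 <= x) (hy0 : 0 < y) (Y : {set vert S}) (u : vert S) : 0 <= sc_fit x y Y u.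
Proof. rewrite /sc_fit; case: (u \in Y); case: u => _ /=; lra. Qed.

Lemma f_lex (hx : 1 <= x) (hy1 : y <= 1) (Y : {set vert S}) (u : vert S) : sc_fit x y Y u <= x.
Proof. rewrite /sc_fit; case: (u \in Y); case: u => _ /=; lra. Qed.

Lemma f_out (Y : {set vert S}) (u : vert S) : u \notin Y -> sc_fit x y Y u = 1.
Proof. by rewrite /sc_fit => /negbTE ->. Qed.

End M.

Lemma ident (R : realType) (a n f : R) : 0 < a -> 0 < n -> 0 < f ->
  (a / n) / (a / n + n) * (n / f) = (1 - (a / n) / (a / n + n)) * (a / f * n^-1).
Proof.
move=> a0 n0 f0.
field.
by rewrite !gt_eqF // ?addr_gt0 // mulr_gt0.
Qed.

Section Main.
Variables (R : realType) (U : finType) (S : {set {set U}}) (x y : R) (X : {set vert S}).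

Definition nV : R := (#|[set: vert S]|)%:R.
Definition pp : R := (x / nV) / (x / nV + nV).
Definition gg : R := (nV * nV)^-1.
Definition mu : R := 1 - (1 - pp) * gg.
Definition HH (t k : nat) : R := Num.max (pp ^+ k - mu ^+ t) 0.

Lemma nV_ge0 : 0 <= nV. Proof. exact: ler0n. Qed.

Lemma pp_ge0 (hx : 1 <= x) : 0 <= pp.
Proof.
have n0 := nV_ge0.
rewrite /pp divr_ge0 // ?addr_ge0 // divr_ge0 //; lra.
Qed.

Lemma pp_le1 (hx : 1 <= x) : pp <= 1.
Proof.
have n0 := nV_ge0.
have a0 : 0 <= x / nV by rewrite divr_ge0 //; lra.
rewrite /pp; have [->|d0] := eqVneq (x / nV + nV) 0; first by rewrite invr0 mulr0 ler01.
rewrite ler_pdivrMr; last by rewrite lt_neqAle eq_sym d0 addr_ge0.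
lra.
Qed.

Lemma gg_ge0 : 0 <= gg.
Proof. by rewrite /gg invr_ge0 mulr_ge0 // nV_ge0. Qed.

Lemma gg_le1 : gg <= 1.
Proof.
rewrite /gg /nV; case: #|_| => [|m]; first by rewrite mulr0 invr0 ler01.
rewrite invf_le1 ?mulr_gt0 ?ltr0n //.
by rewrite -natrM ler1n muln_gt0.
Qed.

Lemma mu_ge0 (hx : 1 <= x) : 0 <= mu.
Proof.
have := pp_ge0 hx; have := pp_le1 hx; have := gg_ge0; have := gg_le1.
rewrite /mu => *.
have : (1 - pp) * gg <= 1 * 1 by apply: ler_pM; lra.
lra.
Qed.

Lemma mu_le1 (hx : 1 <= x) : mu <= 1.
Proof.
have := pp_le1 hx; have := gg_ge0; rewrite /mu => *.
have : 0 <= (1 - pp) * gg by apply: mulr_ge0; lra.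
lra.
Qed.

Lemma HH_ge0 t k : 0 <= HH t k.
Proof. by rewrite /HH le_max lexx orbT. Qed.

Lemma HH_le1 (hx : 1 <= x) t k : HH t k <= 1.
Proof.
rewrite /HH ge_max ler01 andbT.
have := exprn_ile1 k (pp_ge0 hx) (pp_le1 hx).
have := exprn_ge0 t (mu_ge0 hx).
lra.
Qed.

Lemma HH_mono (hx : 1 <= x) t k1 k2 : (k1 <= k2)%N -> HH t k2 <= HH t k1.
Proof.
move=> hk; rewrite /HH ge_max !le_max lexx !orbT andbT.
apply/orP; left; rewrite lerD2r.
by apply: ler_wiXn2l => //; [exact: pp_ge0 | exact: pp_le1].
Qed.


Lemma main_step (hx : 1 <= x) (hy0 : 0 < y) (hy1 : y <= 1)
  (hcov : forall e : U, exists A : V1 S, inl A \in X /\ e \in val A) :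
  forall t (Y : {set vert S}), valid X Y ->
  HH t (kk Y) <= moran_reach (@sc_w R U S) (sc_fit x y) (sc_target X) t Y.
Proof.
have hb := reach_bounds (sc_target X) (@w_ge0 R U S) (@sum_w_le1 R U S) (f_ge0 hx hy0).
elim=> [|t IH] Y vY.
  apply: (@le_trans _ _ 0); last by have /andP[] := hb 0%N Y.
  rewrite /HH expr0 ge_max lexx andbT subr_le0.
  by apply: exprn_ile1; [exact: pp_ge0 | exact: pp_le1].
rewrite [moran_reach _ _ _ t.+1 Y]/=.
case hTg: (sc_target X Y); first exact: HH_le1.
have k0 : kk Y != 0%N by move: hTg; rewrite tgt_iff vY /=; move/negbT.
have /card_gt0P [e0] : (0 < kk Y)%N by rewrite lt0n.
rewrite inE => he0.
have [A0 [hA0X he0A]] := hcov e0.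
have hA0Y : inl A0 \in Y := implyP (forallP vY A0) hA0X.
set u0 := (inl A0 : vert S).
set Hk := HH t (kk Y); set Hk1 := HH t (kk Y).-1.
set w0 := @sc_w R U S u0 (inr e0).
set F := \sum_z sc_fit x y Y z.
set r := moran_reach (@sc_w R U S) (sc_fit x y) (sc_target X) t.
have dH : 0 <= Hk1 - Hk by rewrite subr_ge0; apply: HH_mono => //; exact: leq_pred.
have hr : forall v, Hk + (if v == inr e0 then Hk1 - Hk else 0) <= r (v |: Y).
  move=> v; case: eqP => [->|_].
    rewrite addrC subrK; apply: le_trans (IH _ (valid_add _ vY)).
    apply: HH_mono => //; rewrite -ltnS prednK ?lt0n //; exact: kk_add_e.
  rewrite addr0; apply: le_trans (IH _ (valid_add _ vY)).
  by apply: HH_mono => //; exact: kk_add.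
have fu0 : sc_fit x y Y u0 = x by rewrite /sc_fit hA0Y.
have F_ge : x <= F.
  rewrite /F (bigD1 u0) //= fu0.
  have : 0 <= \sum_(i | i != u0) sc_fit x y Y i by apply: sumr_ge0 => *; exact: f_ge0.
  lra.
have F0 : 0 < F by lra.
have nV1 : 1 <= nV.
  by rewrite /nV ler1n; apply/card_gt0P; exists u0; rewrite inE.
have F_le : F <= x * nV.
  apply: le_trans (ler_sum _ (fun u _ => f_lex hx hy1 Y u)) _.
  by rewrite sumr_const /nV cardsT mulr_natr.
have hT : forall u, (if u \in Y then Hk else 0) + (if u == u0 then w0 * (Hk1 - Hk) else 0)
   <= \sum_v @sc_w R U S u v * r (if u \in Y then v |: Y else Y :\ v) + (1 - \sum_v @sc_w R U S u v) * r Y.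
  move=> u; have hrY := IH Y vY.
  have s1 := @sum_w_le1 R U S u.
  have s0 : 0 <= 1 - \sum_v @sc_w R U S u v by rewrite subr_ge0.
  have B2 : (1 - \sum_v @sc_w R U S u v) * Hk <= (1 - \sum_v @sc_w R U S u v) * r Y := ler_wpM2l s0 hrY.
  case: (boolP (u \in Y)) => uY.
  - pose c (v : vert S) := if u == u0 then (if v == inr e0 then Hk1 - Hk else 0) else 0.
    have B1 : \sum_v @sc_w R U S u v * (Hk + c v) <= \sum_v @sc_w R U S u v * r (v |: Y).
      apply: ler_sum => v _; apply: ler_wpM2l; first exact: w_ge0.
      rewrite /c; case: (u == u0); first exact: hr.
      by apply: le_trans (hr v); case: (v == inr e0); rewrite ?addr0 ?lerDl.
    have E1 : \sum_v @sc_w R U S u v * (Hk + c v) =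
        (\sum_v @sc_w R U S u v) * Hk + \sum_v @sc_w R U S u v * c v.
      by rewrite mulr_suml -big_split; apply: eq_bigr => v _; rewrite mulrDr.
    have E2 : \sum_v @sc_w R U S u v * c v = if u == u0 then w0 * (Hk1 - Hk) else 0.
      rewrite /c; case: eqP => [->|_].
        rewrite (bigD1 (inr e0)) //= eqxx big1 ?addr0 // => v /negbTE ->.
        by rewrite mulr0.
      by rewrite big1 // => v _; rewrite mulr0.
    rewrite E1 E2 in B1.
    lra.
  - have nu0 : (u == u0) = false by apply/negbTE; apply: contraNneq uY => ->.
    rewrite nu0 addr0.
    apply: addr_ge0.
      apply: sumr_ge0 => v _; apply: mulr_ge0; first exact: w_ge0.
      by have /andP[] := hb t (Y :\ v).
    by apply: mulr_ge0 => //; have /andP[] := hb t Y.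
set B' := \sum_u (if u \in Y then 0 else sc_fit x y Y u).
have B'ge : 0 <= B'.
  by apply: sumr_ge0 => u _; case: ifP => _ //; exact: f_ge0.
have B'le : B' <= F.
  by apply: ler_sum => u _; case: ifP => _ //; exact: f_ge0.
have B'n : B' <= nV.
  apply: le_trans (_ : _ <= \sum_(u : vert S) 1) _.
    apply: ler_sum => u _; case: ifP => h; first exact: ler01.
    by rewrite f_out ?h.
  by rewrite sumr_const /nV cardsT.
set b := B' / F.
have E : \sum_u sc_fit x y Y u / F * ((if u \in Y then Hk else 0) +
      (if u == u0 then w0 * (Hk1 - Hk) else 0))
    = (1 - b) * Hk + (x / F * w0) * (Hk1 - Hk).
  under eq_bigr do rewrite mulrDr.
  rewrite big_split /=.
  rewrite [X in _ + X](bigD1 u0) //= eqxx [X in _ + (_ + X)]big1 ?addr0; last first.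
    by move=> u /negbTE ->; rewrite mulr0.
  rewrite fu0 mulrA; congr (_ + _).
  have -> : 1 - b = (F - B') / F by rewrite /b mulrBl divff // gt_eqF.
  have -> : F - B' = \sum_u (if u \in Y then sc_fit x y Y u else 0).
    by rewrite /F /B' -sumrB; apply: eq_bigr => u _; case: ifP; rewrite ?subr0 ?subrr.
  rewrite !mulr_suml; apply: eq_bigr => u _; case: ifP => _; rewrite ?mulr0 ?mul0r //.
apply: le_trans (_ : _ <= (1 - b) * Hk + (x / F * w0) * (Hk1 - Hk)) _; last first.
  rewrite -E; apply: ler_sum => u _; apply: ler_wpM2l; last exact: hT.
  by rewrite divr_ge0 ?f_ge0 // ltW.
have nV0 : 0 < nV by lra.
have x0 : 0 < x by lra.
have hw0 : nV^-1 <= w0 := w_edge R he0A.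
have xF : nV^-1 <= x / F.
  rewrite ler_pdivlMr //.
  have : nV^-1 * F <= nV^-1 * (x * nV) by apply: ler_wpM2l => //; rewrite invr_ge0 ltW.
  have -> : nV^-1 * (x * nV) = x by field; rewrite gt_eqF.
  done.
have nVi0 : 0 <= nV^-1 by rewrite invr_ge0 ltW.
have G_ge : gg <= x / F * w0.
  by rewrite /gg invfM; apply: ler_pM.
have pp0 : 0 < pp.
  by rewrite /pp divr_gt0 // ?addr_gt0 // divr_gt0.
have pp1 := pp_le1 hx.
have gg0 : 0 < gg by rewrite /gg invr_gt0 mulr_gt0.
have pg : pp * gg <= x / F * w0.
  apply: le_trans G_ge; rewrite -[X in _ <= X]mul1r; apply: ler_wpM2r => //; exact: ltW.
have bn : b <= nV / F by apply: ler_wpM2r => //; rewrite invr_ge0 ltW.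
have pb : pp * b <= (1 - pp) * (x / F * w0).
  apply: le_trans (_ : _ <= pp * (nV / F)) _; first by apply: ler_wpM2l => //; exact: ltW.
  have -> : pp * (nV / F) = (1 - pp) * (x / F * nV^-1).
    exact: ident.
  apply: ler_wpM2l; first by rewrite subr_ge0.
  by apply: ler_wpM2l => //; rewrite divr_ge0 // ltW.
have b0 : 0 <= b by rewrite divr_ge0 // ltW.
have b1 : b <= 1 by rewrite /b ler_pdivrMr // mul1r.
rewrite /Hk /Hk1 /HH exprS.
apply: (@key R pp gg b (x / F * w0) (pp ^+ kk Y) (pp ^+ (kk Y).-1) (mu ^+ t)) => //.
- exact: gg_le1.
- by rewrite -exprS prednK // lt0n.
- exact: exprn_ge0 (ltW pp0).
- exact: exprn_ge0 (mu_ge0 hx).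
Qed.

End Main.

Theorem lemma4 (R : realType) (U : finType) (S : {set {set U}}) (x y : R)
  (hU : \bigcup_(A in S) A = [set: U])
  (hx : 1 <= x) (hy0 : 0 < y) (hy1 : y <= 1)
  (X : {set vert S})
  (hcov : forall e : U, exists A : V1 S, inl A \in X /\ e \in val A) :
  let n : R := (#|[set: vert S]|)%:R in
  ((x / n) / (x / n + n)) ^+ #|[set: U]|
    <= moran_hit (@sc_w R U S) (sc_fit x y) (sc_target X) X.
Proof.
change ((@pp R U S x) ^+ #|[set: U]| <= moran_hit (@sc_w R U S) (sc_fit x y) (sc_target X) X).
have vX : valid X X by apply/forallP => A; apply/implyP.
have kN : (kk X <= #|[set: U]|)%N by rewrite cardsT; apply: max_card.
have hb := reach_bounds (sc_target X) (@w_ge0 R U S) (@sum_w_le1 R U S) (f_ge0 hx hy0).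
have hsup : has_sup [set moran_reach (@sc_w R U S) (sc_fit x y) (sc_target X) t X | t in [set: nat]]%classic.
  split; first by exists (moran_reach (@sc_w R U S) (sc_fit x y) (sc_target X) 0 X); exists 0%N.
  exists 1 => z [t _ <-]; by have /andP[] := hb t X.
have ub := sup_upper_bound hsup.
have ubt : forall t, moran_reach (@sc_w R U S) (sc_fit x y) (sc_target X) t X <=
    moran_hit (@sc_w R U S) (sc_fit x y) (sc_target X) X.
  by move=> t; apply: ub; exists t.
have [N0|Npos] := posnP #|[set: U]|.
  rewrite N0 expr0; apply: le_trans (ubt 0%N); rewrite /=.
  have -> : sc_target X X by rewrite tgt_iff vX /=; move: kN; rewrite N0 leqn0.
  by [].
have nV1 : 1 <= @nV R U S.
  rewrite /nV ler1n; have /card_gt0P [e _] := Npos.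
  by apply/card_gt0P; exists (inr e); rewrite inE.
have x0 : 0 < x by lra.
have nV0 : 0 < @nV R U S by lra.
have a0 : 0 < x / @nV R U S by rewrite divr_gt0.
have pp1 : @pp R U S x < 1.
  by rewrite /pp ltr_pdivrMr ?addr_gt0 // mul1r ltrDl.
have gg0 : 0 < @gg R U S by rewrite /gg invr_gt0 mulr_gt0.
have mu1 : @mu R U S x < 1.
  rewrite /mu; have : 0 < (1 - @pp R U S x) * @gg R U S by rewrite mulr_gt0 // subr_gt0.
  lra.
rewrite leNgt; apply/negP => hlt.
have eps : 0 < @pp R U S x ^+ #|[set: U]| -
   moran_hit (@sc_w R U S) (sc_fit x y) (sc_target X) X by rewrite subr_gt0.
have [t ht] := geom (mu_ge0 S hx) mu1 eps.
have h1 := main_step hx hy0 hy1 hcov t vX.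
have h2 : @pp R U S x ^+ #|[set: U]| - @mu R U S x ^+ t <= @HH R U S x t (kk X).
  rewrite /HH le_max; apply/orP; left; rewrite lerD2r.
  apply: ler_wiXn2l => //; [exact: pp_ge0 | exact: ltW].
have h3 := ubt t.
clear -h1 h2 h3 ht; lra.
Qed.
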